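(* Let $f\in\mathcal{F}_3$ and $\mathbf{x}\in[0,1]^3$. (a) There exists an optimal solution $\theta$ of the linear program defining $f^{+}(\mathbf{x})$ with $\theta(\{1,2,3\})\le x_1x_2x_3$. (b) If moreover $x_1+x_2+x_3\le1$ or $x_1+x_2+x_3\ge2$, there exists an optimal solution $\theta$ of that linear program which is negatively cylinder dependent, i.e. $\sum_{S\supseteq T}\theta(S)\le\prod_{i\in T}x_i$ for every nonempty $T\subseteq[3]$.
   Context: $[n]=\{1,\dots,n\}$. A set function $f:2^{[n]}\to\mathbb{R}_+$ is monotone if $f(S)\le f(T)$ for $S\subseteq T$, submodular if $f(S)+f(T)\ge f(S\cap T)+f(S\cup T)$. $\mathcal{F}_n$ is the set of monotone submodular $f:2^{[n]}\to\mathbb{R}_+$ with $f(\emptyset)=0$, $f([n])=1$. For $\mathbf{x}\in[0,1]^n$, the concave closure $f^{+}(\mathbf{x})$ is the optimal value of the linear program: maximize $\sum_{S\subseteq[n]}\theta(S)f(S)$ over $\theta:2^{[n]}\to\mathbb{R}_{\ge0}$ with $\sum_S\theta(S)=1$ and $\sum_{S\ni i}\theta(S)=x_i$ for all $i\in[n]$. *)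

(* Defs.v *)
From mathcomp Require Import all_boot all_order all_algebra.
From mathcomp Require Import reals.
Set Implicit Arguments. Unset Strict Implicit. Unset Printing Implicit Defensive.
Import Order.TTheory GRing.Theory Num.Theory.
Local Open Scope ring_scope.

Section Defs.
Variables (R : realType) (n : nat).

Definition in_Fn (f : {set 'I_n} -> R) : Prop :=
  [/\ (forall S, 0 <= f S),
      (forall S T : {set 'I_n}, S \subset T -> f S <= f T),
      (forall S T : {set 'I_n}, f (S :&: T) + f (S :|: T) <= f S + f T),
      f set0 = 0 & f setT = 1].

Definition in_cube (x : 'I_n -> R) : Prop := forall i, 0 <= x i <= 1.

Definition lp_feasible (x : 'I_n -> R) (theta : {set 'I_n} -> R) : Prop :=
  [/\ (forall S, 0 <= theta S),
      \sum_(S : {set 'I_n}) theta S = 1 &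
      (forall i, \sum_(S : {set 'I_n} | i \in S) theta S = x i)].

Definition lp_obj (f : {set 'I_n} -> R) (theta : {set 'I_n} -> R) : R :=
  \sum_(S : {set 'I_n}) theta S * f S.

Definition lp_optimal (f : {set 'I_n} -> R) (x : 'I_n -> R)
    (theta : {set 'I_n} -> R) : Prop :=
  lp_feasible x theta /\
  (forall theta', lp_feasible x theta' -> lp_obj f theta' <= lp_obj f theta).

Definition neg_cylinder_dep (x : 'I_n -> R) (theta : {set 'I_n} -> R) : Prop :=
  forall T : {set 'I_n}, T != set0 ->
    \sum_(S : {set 'I_n} | T \subset S) theta S <= \prod_(i in T) x i.

End Defs.

(* Main.v *)
Require Import Defs.
From mathcomp Require Import all_boot all_order all_algebra.
From mathcomp Require Import reals.
From mathcomp Require Import ring lra.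
Import Order.TTheory GRing.Theory Num.Theory.
Local Open Scope ring_scope.

Definition o0 : 'I_3 := @Ordinal 3 0 isT.
Definition o1 : 'I_3 := @Ordinal 3 1 isT.
Definition o2 : 'I_3 := @Ordinal 3 2 isT.

Lemma ord3P (i : 'I_3) : i = o0 \/ i = o1 \/ i = o2.
Proof.
case: i => [[|[|[|m]]] Hi].
- by left; apply: val_inj.
- by right; left; apply: val_inj.
- by right; right; apply: val_inj.
- by [].
Qed.

Definition g3 (a b c : bool) : {set 'I_3} := [set i : 'I_3 | nth false [:: a; b; c] i].

Lemma memg0 a b c : (o0 \in g3 a b c) = a. Proof. by rewrite inE. Qed.
Lemma memg1 a b c : (o1 \in g3 a b c) = b. Proof. by rewrite inE. Qed.
Lemma memg2 a b c : (o2 \in g3 a b c) = c. Proof. by rewrite inE. Qed.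

Lemma gK (S : {set 'I_3}) : g3 (o0 \in S) (o1 \in S) (o2 \in S) = S.
Proof.
apply/setP => i; case: (ord3P i) => [->|[->|->]]; by rewrite ?memg0 ?memg1 ?memg2.
Qed.

Lemma gI a b c a' b' c' : g3 a b c :&: g3 a' b' c' = g3 (a && a') (b && b') (c && c').
Proof.
apply/setP => i; rewrite inE.
case: (ord3P i) => [->|[->|->]]; by rewrite ?memg0 ?memg1 ?memg2.
Qed.

Lemma gU a b c a' b' c' : g3 a b c :|: g3 a' b' c' = g3 (a || a') (b || b') (c || c').
Proof.
apply/setP => i; rewrite inE.
case: (ord3P i) => [->|[->|->]]; by rewrite ?memg0 ?memg1 ?memg2.
Qed.

Lemma g0 : set0 = g3 false false false.
Proof. apply/setP => i; rewrite inE. case: (ord3P i) => [->|[->|->]]; by rewrite ?memg0 ?memg1 ?memg2. Qed.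

Lemma gT : setT = g3 true true true.
Proof. apply/setP => i; rewrite inE. case: (ord3P i) => [->|[->|->]]; by rewrite ?memg0 ?memg1 ?memg2. Qed.

Lemma gsub a b c a' b' c' : (g3 a b c \subset g3 a' b' c') = [&& a ==> a', b ==> b' & c ==> c'].
Proof.
apply/subsetP/idP.
- move=> H; apply/and3P; split; apply/implyP => h.
  + by have := H o0; rewrite !memg0; apply.
  + by have := H o1; rewrite !memg1; apply.
  + by have := H o2; rewrite !memg2; apply.
- move=> /and3P [h0 h1 h2] i.
  case: (ord3P i) => [->|[->|->]]; rewrite ?memg0 ?memg1 ?memg2; exact/implyP.
Qed.

Section S.
Variable R : realType.

Lemma sum_set3 (G : {set 'I_3} -> R) :
  \sum_(S : {set 'I_3}) G S =
  G (g3 false false false) + G (g3 true false false) + G (g3 false true false)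
  + G (g3 false false true) + G (g3 true true false) + G (g3 true false true)
  + G (g3 false true true) + G (g3 true true true).
Proof.
rewrite (reindex (fun p : (bool * bool) * bool => g3 p.1.1 p.1.2 p.2)) /=; last first.
  exists (fun S : {set 'I_3} => (o0 \in S, o1 \in S, o2 \in S)) => [[[a b] c] _|S _] /=.
    by rewrite memg0 memg1 memg2.
  exact: gK.
rewrite -(pair_big xpredT xpredT (fun p c => G (g3 p.1 p.2 c))) /=.
rewrite -(pair_big xpredT xpredT (fun a b => \sum_(c : bool) G (g3 a b c))) /=.
rewrite !big_bool /=. lra.
Qed.

Lemma sum_ord3 (F : 'I_3 -> R) : \sum_(i < 3) F i = F o0 + F o1 + F o2.
Proof.
rewrite !big_ord_recr big_ord0 /= add0r.
by congr (F _ + F _ + F _); apply: val_inj.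
Qed.

Lemma prod_ord3 (F : 'I_3 -> R) : \prod_(i < 3) F i = F o0 * F o1 * F o2.
Proof.
rewrite !big_ord_recr big_ord0 /= mul1r.
by congr (F _ * F _ * F _); apply: val_inj.
Qed.

End S.
Set Implicit Arguments. Unset Strict Implicit.

Section C.
Variable R : realType.

Definition thS (T : bool -> bool -> bool -> R) (S : {set 'I_3}) : R :=
  T (o0 \in S) (o1 \in S) (o2 \in S).

Definition sum8 (G : bool -> bool -> bool -> R) : R :=
  G false false false + G true false false + G false true false
  + G false false true + G true true false + G true false true
  + G false true true + G true true true.

Lemma sum_set3' (G : {set 'I_3} -> R) :
  \sum_(S : {set 'I_3}) G S = sum8 (fun a b c => G (g3 a b c)).
Proof. by rewrite sum_set3. Qed.

Lemma cert (f : {set 'I_3} -> R) (x : 'I_3 -> R) (T : bool -> bool -> bool -> R)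
   (lam m0 m1 m2 : R) :
  (forall a b c, 0 <= T a b c) ->
  sum8 T = 1 ->
  T true false false + T true true false + T true false true + T true true true = x o0 ->
  T false true false + T true true false + T false true true + T true true true = x o1 ->
  T false false true + T true false true + T false true true + T true true true = x o2 ->
  (forall a b c, f (g3 a b c) <= lam + (if a then m0 else 0) + (if b then m1 else 0)
                                   + (if c then m2 else 0)) ->
  sum8 (fun a b c => T a b c * f (g3 a b c)) = lam + m0 * x o0 + m1 * x o1 + m2 * x o2 ->
  lp_optimal f x (thS T).
Proof.
move=> T0 Ts Tm0 Tm1 Tm2 Df Dv.
have feas : lp_feasible x (thS T).
  split.
  - by move=> S; rewrite /thS.
  - by rewrite sum_set3' /sum8 /thS !memg0 !memg1 !memg2; move: Ts; rewrite /sum8.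
  - move=> i; rewrite big_mkcond /= sum_set3' /sum8 /thS.
    case: (ord3P i) => [->|[->|->]]; rewrite !memg0 !memg1 !memg2 /=; lra.
split => // th' [h0 h1 h2].
have -> : lp_obj f (thS T) = lam + m0 * x o0 + m1 * x o1 + m2 * x o2.
  by rewrite /lp_obj sum_set3' /sum8 /thS !memg0 !memg1 !memg2; move: Dv; rewrite /sum8.
have mx : forall j, \sum_(S : {set 'I_3}) (if j \in S then th' S else 0) = x j.
  by move=> j; rewrite -big_mkcond h2.
rewrite /lp_obj.
apply: (@le_trans _ _ (\sum_(S : {set 'I_3}) (lam * th' S + m0 * (if o0 \in S then th' S else 0)
   + m1 * (if o1 \in S then th' S else 0) + m2 * (if o2 \in S then th' S else 0)))).
  apply: ler_sum => S _.
  have := Df (o0 \in S) (o1 \in S) (o2 \in S); rewrite gK => D.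
  have := h0 S => t0.
  have E : lam * th' S + m0 * (if o0 \in S then th' S else 0) +
    m1 * (if o1 \in S then th' S else 0) + m2 * (if o2 \in S then th' S else 0) =
    th' S * (lam + (if o0 \in S then m0 else 0) + (if o1 \in S then m1 else 0)
                                   + (if o2 \in S then m2 else 0)).
    by case: (o0 \in S); case: (o1 \in S); case: (o2 \in S); ring.
  by rewrite E; apply: ler_wpM2l.
rewrite !big_split /= -!mulr_sumr h1 !mx mulr1.
by [].
Qed.

End C.

Section M.
Variable R : realType.
Definition mk8 (v000 v100 v010 v001 v110 v101 v011 v111 : R) (a b c : bool) : R :=
 match a, b, c with
 | false,false,false => v000 | true,false,false => v100 | false,true,false => v010
 | false,false,true => v001 | true,true,false => v110 | true,false,true => v101
 | false,true,true => v011 | true,true,true => v111 end.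

Lemma thS_T (T : bool -> bool -> bool -> R) : thS T setT = T true true true.
Proof. by rewrite /thS !inE. Qed.

Lemma ncd_red (x : 'I_3 -> R) (T : bool -> bool -> bool -> R) :
  (forall a b c, (a || b || c) ->
     sum8 (fun a' b' c' => if [&& a ==> a', b ==> b' & c ==> c'] then T a' b' c' else 0)
     <= (if a then x o0 else 1) * (if b then x o1 else 1) * (if c then x o2 else 1)) ->
  neg_cylinder_dep x (thS T).
Proof.
move=> H S; rewrite -(gK S).
move: (o0 \in S) (o1 \in S) (o2 \in S) => a b c hne.
rewrite big_mkcond sum_set3' /sum8 /thS !memg0 !memg1 !memg2 !gsub.
rewrite big_mkcond prod_ord3 !memg0 !memg1 !memg2.
have := H a b c; rewrite /sum8; apply.
move: hne; rewrite g0; case: a; case: b; case: c => //=; by rewrite eqxx.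
Qed.
End M.

Ltac getfacts Hf Hx :=
  let h0 := fresh "h0" in let hm := fresh "hm" in let hs := fresh "hs" in
  let e0 := fresh "e0" in let e1 := fresh "e1" in
  case: Hf => h0 hm hs e0 e1; rewrite g0 in e0; rewrite gT in e1;
  pose proof (hs (g3 true false false) (g3 false true false)) as s0; rewrite gI gU /= in s0;
  pose proof (hs (g3 true false false) (g3 false false true)) as s1; rewrite gI gU /= in s1;
  pose proof (hs (g3 false true false) (g3 false false true)) as s2; rewrite gI gU /= in s2;
  pose proof (hs (g3 true true false) (g3 true false true)) as s3; rewrite gI gU /= in s3;
  pose proof (hs (g3 true true false) (g3 false true true)) as s4; rewrite gI gU /= in s4;
  pose proof (hs (g3 true false true) (g3 false true true)) as s5; rewrite gI gU /= in s5;
  pose proof (hs (g3 true false false) (g3 false true true)) as s6; rewrite gI gU /= in s6;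
  pose proof (hs (g3 false true false) (g3 true false true)) as s7; rewrite gI gU /= in s7;
  pose proof (hs (g3 false false true) (g3 true true false)) as s8; rewrite gI gU /= in s8;
  move: (Hx o0) => /andP [c0 c0'];
  move: (Hx o1) => /andP [c1 c1'];
  move: (Hx o2) => /andP [c2 c2'];
  idtac.
Lemma mid0 (R : realType) (f : {set 'I_3} -> R) (x : 'I_3 -> R) :
  in_Fn f -> in_cube x -> 1 <= (x o0 + x o1 + x o2) -> (x o0 + x o1 + x o2) <= 2 -> (f (g3 false true false) + f (g3 true false true)) <= (f (g3 true false false) + f (g3 false true true)) -> (f (g3 false false true) + f (g3 true true false)) <= (f (g3 true false false) + f (g3 false true true)) ->
  exists theta, lp_optimal f x theta /\ theta setT <= x o0 * x o1 * x o2.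
Proof.
move=> Hf Hx hs1 hs2 gi gj.
getfacts Hf Hx.
have P : 0 <= x o0 * x o1 * x o2 by rewrite !mulr_ge0.
have [di|di] := lerP 0 (x o1 - ((x o0 + x o1 + x o2) - 1));
have [dj|dj] := lerP 0 (x o2 - ((x o0 + x o1 + x o2) - 1)).
- exists (thS (mk8 (0) (x o0) (x o1 - (x o0 + x o1 + x o2) + 1) (x o2 - (x o0 + x o1 + x o2) + 1) (0) (0) ((x o0 + x o1 + x o2) - 1) (0))); split.
    apply: (@cert _ f x _ ((f (g3 false true false)) + (f (g3 false false true)) - (f (g3 false true true))) ((f (g3 true false false)) - ((f (g3 false true false)) + (f (g3 false false true)) - (f (g3 false true true)))) ((f (g3 false true true)) - (f (g3 false false true))) ((f (g3 false true true)) - (f (g3 false true false)))).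
    - by clear -hs1 hs2 di dj c0 c0' c1 c1' c2 c2'; case; case; case => /=; lra.
    - by rewrite /sum8 /=; lra.
    - by rewrite /=; lra.
    - by rewrite /=; lra.
    - by rewrite /=; lra.
    - by clear -gi gj e0 e1 s0 s1 s2 s3 s4 s5 s6 s7 s8; case; case; case => /=; lra.
    - by rewrite /sum8 /= e0 e1; ring.
  by rewrite thS_T /=.
- exists (thS (mk8 (0) (1 - x o1) (x o1 - (x o0 + x o1 + x o2) + 1) (0) ((x o0 + x o1 + x o2) - 1 - x o2) (0) (x o2) (0))); split.
    apply: (@cert _ f x _ ((f (g3 true false false)) + (f (g3 false true false)) - (f (g3 true true false))) ((f (g3 true true false)) - (f (g3 false true false))) ((f (g3 true true false)) - (f (g3 true false false))) ((f (g3 false true true)) - (f (g3 false true false)))).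
    - by clear -hs1 hs2 di dj c0 c0' c1 c1' c2 c2'; case; case; case => /=; lra.
    - by rewrite /sum8 /=; lra.
    - by rewrite /=; lra.
    - by rewrite /=; lra.
    - by rewrite /=; lra.
    - by clear -gi gj e0 e1 s0 s1 s2 s3 s4 s5 s6 s7 s8; case; case; case => /=; lra.
    - by rewrite /sum8 /= e0 e1; ring.
  by rewrite thS_T /=.
- exists (thS (mk8 (0) (1 - x o2) (0) (x o2 - (x o0 + x o1 + x o2) + 1) (0) ((x o0 + x o1 + x o2) - 1 - x o1) (x o1) (0))); split.
    apply: (@cert _ f x _ ((f (g3 true false false)) - (f (g3 true false true)) + (f (g3 false false true))) ((f (g3 true false true)) - (f (g3 false false true))) ((f (g3 false true true)) - (f (g3 false false true))) ((f (g3 true false true)) - (f (g3 true false false)))).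
    - by clear -hs1 hs2 di dj c0 c0' c1 c1' c2 c2'; case; case; case => /=; lra.
    - by rewrite /sum8 /=; lra.
    - by rewrite /=; lra.
    - by rewrite /=; lra.
    - by rewrite /=; lra.
    - by clear -gi gj e0 e1 s0 s1 s2 s3 s4 s5 s6 s7 s8; case; case; case => /=; lra.
    - by rewrite /sum8 /= e0 e1; ring.
  by rewrite thS_T /=.
- exists (thS (mk8 (0) (2 - (x o0 + x o1 + x o2)) (0) (0) ((x o0 + x o1 + x o2) - 1 - x o2) ((x o0 + x o1 + x o2) - 1 - x o1) (1 - x o0) (0))); split.
    apply: (@cert _ f x _ ((f (g3 false true true)) - (f (g3 true true false)) - (f (g3 true false true)) + 2 * (f (g3 true false false))) ((f (g3 true false false)) - ((f (g3 false true true)) - (f (g3 true true false)) - (f (g3 true false true)) + 2 * (f (g3 true false false)))) ((f (g3 true true false)) - (f (g3 true false false))) ((f (g3 true false true)) - (f (g3 true false false)))).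
    - by clear -hs1 hs2 di dj c0 c0' c1 c1' c2 c2'; case; case; case => /=; lra.
    - by rewrite /sum8 /=; lra.
    - by rewrite /=; lra.
    - by rewrite /=; lra.
    - by rewrite /=; lra.
    - by clear -gi gj e0 e1 s0 s1 s2 s3 s4 s5 s6 s7 s8; case; case; case => /=; lra.
    - by rewrite /sum8 /= e0 e1; ring.
  by rewrite thS_T /=.
Qed.

Lemma mid1 (R : realType) (f : {set 'I_3} -> R) (x : 'I_3 -> R) :
  in_Fn f -> in_cube x -> 1 <= (x o0 + x o1 + x o2) -> (x o0 + x o1 + x o2) <= 2 -> (f (g3 true false false) + f (g3 false true true)) <= (f (g3 false true false) + f (g3 true false true)) -> (f (g3 false false true) + f (g3 true true false)) <= (f (g3 false true false) + f (g3 true false true)) ->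
  exists theta, lp_optimal f x theta /\ theta setT <= x o0 * x o1 * x o2.
Proof.
move=> Hf Hx hs1 hs2 gi gj.
getfacts Hf Hx.
have P : 0 <= x o0 * x o1 * x o2 by rewrite !mulr_ge0.
have [di|di] := lerP 0 (x o0 - ((x o0 + x o1 + x o2) - 1));
have [dj|dj] := lerP 0 (x o2 - ((x o0 + x o1 + x o2) - 1)).
- exists (thS (mk8 (0) (x o0 - (x o0 + x o1 + x o2) + 1) (x o1) (x o2 - (x o0 + x o1 + x o2) + 1) (0) ((x o0 + x o1 + x o2) - 1) (0) (0))); split.
    apply: (@cert _ f x _ ((f (g3 true false false)) + (f (g3 false false true)) - (f (g3 true false true))) ((f (g3 true false true)) - (f (g3 false false true))) ((f (g3 false true false)) - ((f (g3 true false false)) + (f (g3 false false true)) - (f (g3 true false true)))) ((f (g3 true false true)) - (f (g3 true false false)))).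
    - by clear -hs1 hs2 di dj c0 c0' c1 c1' c2 c2'; case; case; case => /=; lra.
    - by rewrite /sum8 /=; lra.
    - by rewrite /=; lra.
    - by rewrite /=; lra.
    - by rewrite /=; lra.
    - by clear -gi gj e0 e1 s0 s1 s2 s3 s4 s5 s6 s7 s8; case; case; case => /=; lra.
    - by rewrite /sum8 /= e0 e1; ring.
  by rewrite thS_T /=.
- exists (thS (mk8 (0) (x o0 - (x o0 + x o1 + x o2) + 1) (1 - x o0) (0) ((x o0 + x o1 + x o2) - 1 - x o2) (x o2) (0) (0))); split.
    apply: (@cert _ f x _ ((f (g3 false true false)) + (f (g3 true false false)) - (f (g3 true true false))) ((f (g3 true true false)) - (f (g3 false true false))) ((f (g3 true true false)) - (f (g3 true false false))) ((f (g3 true false true)) - (f (g3 true false false)))).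
    - by clear -hs1 hs2 di dj c0 c0' c1 c1' c2 c2'; case; case; case => /=; lra.
    - by rewrite /sum8 /=; lra.
    - by rewrite /=; lra.
    - by rewrite /=; lra.
    - by rewrite /=; lra.
    - by clear -gi gj e0 e1 s0 s1 s2 s3 s4 s5 s6 s7 s8; case; case; case => /=; lra.
    - by rewrite /sum8 /= e0 e1; ring.
  by rewrite thS_T /=.
- exists (thS (mk8 (0) (0) (1 - x o2) (x o2 - (x o0 + x o1 + x o2) + 1) (0) (x o0) ((x o0 + x o1 + x o2) - 1 - x o0) (0))); split.
    apply: (@cert _ f x _ ((f (g3 false true false)) - (f (g3 false true true)) + (f (g3 false false true))) ((f (g3 true false true)) - (f (g3 false false true))) ((f (g3 false true true)) - (f (g3 false false true))) ((f (g3 false true true)) - (f (g3 false true false)))).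
    - by clear -hs1 hs2 di dj c0 c0' c1 c1' c2 c2'; case; case; case => /=; lra.
    - by rewrite /sum8 /=; lra.
    - by rewrite /=; lra.
    - by rewrite /=; lra.
    - by rewrite /=; lra.
    - by clear -gi gj e0 e1 s0 s1 s2 s3 s4 s5 s6 s7 s8; case; case; case => /=; lra.
    - by rewrite /sum8 /= e0 e1; ring.
  by rewrite thS_T /=.
- exists (thS (mk8 (0) (0) (2 - (x o0 + x o1 + x o2)) (0) ((x o0 + x o1 + x o2) - 1 - x o2) (1 - x o1) ((x o0 + x o1 + x o2) - 1 - x o0) (0))); split.
    apply: (@cert _ f x _ ((f (g3 true false true)) - (f (g3 true true false)) - (f (g3 false true true)) + 2 * (f (g3 false true false))) ((f (g3 true true false)) - (f (g3 false true false))) ((f (g3 false true false)) - ((f (g3 true false true)) - (f (g3 true true false)) - (f (g3 false true true)) + 2 * (f (g3 false true false)))) ((f (g3 false true true)) - (f (g3 false true false)))).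
    - by clear -hs1 hs2 di dj c0 c0' c1 c1' c2 c2'; case; case; case => /=; lra.
    - by rewrite /sum8 /=; lra.
    - by rewrite /=; lra.
    - by rewrite /=; lra.
    - by rewrite /=; lra.
    - by clear -gi gj e0 e1 s0 s1 s2 s3 s4 s5 s6 s7 s8; case; case; case => /=; lra.
    - by rewrite /sum8 /= e0 e1; ring.
  by rewrite thS_T /=.
Qed.

Lemma mid2 (R : realType) (f : {set 'I_3} -> R) (x : 'I_3 -> R) :
  in_Fn f -> in_cube x -> 1 <= (x o0 + x o1 + x o2) -> (x o0 + x o1 + x o2) <= 2 -> (f (g3 true false false) + f (g3 false true true)) <= (f (g3 false false true) + f (g3 true true false)) -> (f (g3 false true false) + f (g3 true false true)) <= (f (g3 false false true) + f (g3 true true false)) ->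
  exists theta, lp_optimal f x theta /\ theta setT <= x o0 * x o1 * x o2.
Proof.
move=> Hf Hx hs1 hs2 gi gj.
getfacts Hf Hx.
have P : 0 <= x o0 * x o1 * x o2 by rewrite !mulr_ge0.
have [di|di] := lerP 0 (x o0 - ((x o0 + x o1 + x o2) - 1));
have [dj|dj] := lerP 0 (x o1 - ((x o0 + x o1 + x o2) - 1)).
- exists (thS (mk8 (0) (x o0 - (x o0 + x o1 + x o2) + 1) (x o1 - (x o0 + x o1 + x o2) + 1) (x o2) ((x o0 + x o1 + x o2) - 1) (0) (0) (0))); split.
    apply: (@cert _ f x _ ((f (g3 true false false)) + (f (g3 false true false)) - (f (g3 true true false))) ((f (g3 true true false)) - (f (g3 false true false))) ((f (g3 true true false)) - (f (g3 true false false))) ((f (g3 false false true)) - ((f (g3 true false false)) + (f (g3 false true false)) - (f (g3 true true false))))).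
    - by clear -hs1 hs2 di dj c0 c0' c1 c1' c2 c2'; case; case; case => /=; lra.
    - by rewrite /sum8 /=; lra.
    - by rewrite /=; lra.
    - by rewrite /=; lra.
    - by rewrite /=; lra.
    - by clear -gi gj e0 e1 s0 s1 s2 s3 s4 s5 s6 s7 s8; case; case; case => /=; lra.
    - by rewrite /sum8 /= e0 e1; ring.
  by rewrite thS_T /=.
- exists (thS (mk8 (0) (x o0 - (x o0 + x o1 + x o2) + 1) (0) (1 - x o0) (x o1) ((x o0 + x o1 + x o2) - 1 - x o1) (0) (0))); split.
    apply: (@cert _ f x _ ((f (g3 false false true)) + (f (g3 true false false)) - (f (g3 true false true))) ((f (g3 true false true)) - (f (g3 false false true))) ((f (g3 true true false)) - (f (g3 true false false))) ((f (g3 true false true)) - (f (g3 true false false)))).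
    - by clear -hs1 hs2 di dj c0 c0' c1 c1' c2 c2'; case; case; case => /=; lra.
    - by rewrite /sum8 /=; lra.
    - by rewrite /=; lra.
    - by rewrite /=; lra.
    - by rewrite /=; lra.
    - by clear -gi gj e0 e1 s0 s1 s2 s3 s4 s5 s6 s7 s8; case; case; case => /=; lra.
    - by rewrite /sum8 /= e0 e1; ring.
  by rewrite thS_T /=.
- exists (thS (mk8 (0) (0) (x o1 - (x o0 + x o1 + x o2) + 1) (1 - x o1) (x o0) (0) ((x o0 + x o1 + x o2) - 1 - x o0) (0))); split.
    apply: (@cert _ f x _ ((f (g3 false false true)) - (f (g3 false true true)) + (f (g3 false true false))) ((f (g3 true true false)) - (f (g3 false true false))) ((f (g3 false true true)) - (f (g3 false false true))) ((f (g3 false true true)) - (f (g3 false true false)))).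
    - by clear -hs1 hs2 di dj c0 c0' c1 c1' c2 c2'; case; case; case => /=; lra.
    - by rewrite /sum8 /=; lra.
    - by rewrite /=; lra.
    - by rewrite /=; lra.
    - by rewrite /=; lra.
    - by clear -gi gj e0 e1 s0 s1 s2 s3 s4 s5 s6 s7 s8; case; case; case => /=; lra.
    - by rewrite /sum8 /= e0 e1; ring.
  by rewrite thS_T /=.
- exists (thS (mk8 (0) (0) (0) (2 - (x o0 + x o1 + x o2)) (1 - x o2) ((x o0 + x o1 + x o2) - 1 - x o1) ((x o0 + x o1 + x o2) - 1 - x o0) (0))); split.
    apply: (@cert _ f x _ ((f (g3 true true false)) - (f (g3 true false true)) - (f (g3 false true true)) + 2 * (f (g3 false false true))) ((f (g3 true false true)) - (f (g3 false false true))) ((f (g3 false true true)) - (f (g3 false false true))) ((f (g3 false false true)) - ((f (g3 true true false)) - (f (g3 true false true)) - (f (g3 false true true)) + 2 * (f (g3 false false true))))).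
    - by clear -hs1 hs2 di dj c0 c0' c1 c1' c2 c2'; case; case; case => /=; lra.
    - by rewrite /sum8 /=; lra.
    - by rewrite /=; lra.
    - by rewrite /=; lra.
    - by rewrite /=; lra.
    - by clear -gi gj e0 e1 s0 s1 s2 s3 s4 s5 s6 s7 s8; case; case; case => /=; lra.
    - by rewrite /sum8 /= e0 e1; ring.
  by rewrite thS_T /=.
Qed.

Lemma caseA (R : realType) (f : {set 'I_3} -> R) (x : 'I_3 -> R) :
  in_Fn f -> in_cube x -> (x o0 + x o1 + x o2) <= 1 ->
  exists theta, lp_optimal f x theta /\ theta setT <= x o0 * x o1 * x o2 /\ neg_cylinder_dep x theta.
Proof.
move=> Hf Hx hs1.
getfacts Hf Hx.
have P : 0 <= x o0 * x o1 * x o2 by rewrite !mulr_ge0.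
  exists (thS (mk8 (1 - (x o0 + x o1 + x o2)) (x o0) (x o1) (x o2) (0) (0) (0) (0))); split.
    apply: (@cert _ f x _ (0) ((f (g3 true false false))) ((f (g3 false true false))) ((f (g3 false false true)))).
    - by clear -hs1 c0 c0' c1 c1' c2 c2'; case; case; case => /=; lra.
    - by rewrite /sum8 /=; lra.
    - by rewrite /=; lra.
    - by rewrite /=; lra.
    - by rewrite /=; lra.
    - by clear - e0 e1 s0 s1 s2 s3 s4 s5 s6 s7 s8; case; case; case => /=; lra.
    - by rewrite /sum8 /= e0 e1; ring.
  split; first by rewrite thS_T /=.
  have P01 : 0 <= x o0 * x o1 by rewrite mulr_ge0.
  have P02 : 0 <= x o0 * x o2 by rewrite mulr_ge0.
  have P12 : 0 <= x o1 * x o2 by rewrite mulr_ge0.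
  apply: ncd_red; case; case; case => //= _; rewrite /sum8 /= ?mul1r ?mulr1; lra.
Qed.

Lemma caseB (R : realType) (f : {set 'I_3} -> R) (x : 'I_3 -> R) :
  in_Fn f -> in_cube x -> 2 <= (x o0 + x o1 + x o2) ->
  exists theta, lp_optimal f x theta /\ theta setT <= x o0 * x o1 * x o2 /\ neg_cylinder_dep x theta.
Proof.
move=> Hf Hx hs1.
getfacts Hf Hx.
have Q0 : 0 <= (1 - x o0) * (1 - x o1) * x o2 by rewrite !mulr_ge0 // subr_ge0.
have Q1 : 0 <= (1 - x o0) * (1 - x o2) by rewrite !mulr_ge0 // subr_ge0.
have Q2 : 0 <= (1 - x o1) * (1 - x o2) by rewrite !mulr_ge0 // subr_ge0.
have Q3 : 0 <= (1 - x o0) * (1 - x o1) by rewrite !mulr_ge0 // subr_ge0.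
  exists (thS (mk8 (0) (0) (0) (0) (1 - x o2) (1 - x o1) (1 - x o0) ((x o0 + x o1 + x o2) - 2))); split.
    apply: (@cert _ f x _ (1 - (1 - (f (g3 false true true))) - (1 - (f (g3 true false true))) - (1 - (f (g3 true true false)))) (1 - (f (g3 false true true))) (1 - (f (g3 true false true))) (1 - (f (g3 true true false)))).
    - by clear -hs1 c0 c0' c1 c1' c2 c2'; case; case; case => /=; lra.
    - by rewrite /sum8 /=; lra.
    - by rewrite /=; lra.
    - by rewrite /=; lra.
    - by rewrite /=; lra.
    - by clear - e0 e1 s0 s1 s2 s3 s4 s5 s6 s7 s8; case; case; case => /=; lra.
    - by rewrite /sum8 /= e0 e1; ring.
  split; first by rewrite thS_T /=; nra.
  apply: ncd_red; case; case; case => //= _; rewrite /sum8 /= ?mul1r ?mulr1; nra.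
Qed.

Unset Implicit Arguments. Set Strict Implicit.

Theorem mainTheorem7 (R : realType) (f : {set 'I_3} -> R) (x : 'I_3 -> R) :
  in_Fn f -> in_cube x ->
  (exists theta, lp_optimal f x theta /\
     theta setT <= x (@Ordinal 3 0 isT) * x (@Ordinal 3 1 isT) * x (@Ordinal 3 2 isT)) /\
  (x (@Ordinal 3 0 isT) + x (@Ordinal 3 1 isT) + x (@Ordinal 3 2 isT) <= 1 \/ 2 <= x (@Ordinal 3 0 isT) + x (@Ordinal 3 1 isT) + x (@Ordinal 3 2 isT) ->
   exists theta, lp_optimal f x theta /\ neg_cylinder_dep x theta).
Proof.
move=> Hf Hx.
change (@Ordinal 3 0 isT) with o0; change (@Ordinal 3 1 isT) with o1;
  change (@Ordinal 3 2 isT) with o2.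
have [h1|h1] := lerP (x o0 + x o1 + x o2) 1.
  have [th [H1 [H2 H3]]] := caseA Hf Hx h1.
  by split; [exists th | move=> _; exists th].
have [h2|h2] := lerP 2 (x o0 + x o1 + x o2).
  have [th [H1 [H2 H3]]] := caseB Hf Hx h2.
  by split; [exists th | move=> _; exists th].
split; last by case=> h; exfalso; lra.
have l1 : 1 <= x o0 + x o1 + x o2 by apply: ltW.
have l2 : x o0 + x o1 + x o2 <= 2 by apply: ltW.
have [h21|h21] := lerP (f (g3 false true false) + f (g3 true false true)) (f (g3 true false false) + f (g3 false true true)).
  have [h31|h31] := lerP (f (g3 false false true) + f (g3 true true false)) (f (g3 true false false) + f (g3 false true true)).
    exact: (mid0 Hf Hx l1 l2 h21 h31).
  apply: (mid2 Hf Hx l1 l2); lra.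
have [h32|h32] := lerP (f (g3 false false true) + f (g3 true true false)) (f (g3 false true false) + f (g3 true false true)).
  apply: (mid1 Hf Hx l1 l2); lra.
apply: (mid2 Hf Hx l1 l2); lra.
Qed.
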